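(* Let $C=[x,x+1)\times[y,y+1)$ with $x,y\in\mathbb{Z}$ be a cell of the integer grid, let $\mathcal{D}(C)$ be a finite set of disks of radius $\sqrt{2}$ whose centers lie in $C$, let $\ell_{\mathrm{top}}(C)$ be the line containing the top edge of $C$, and let $U_{\mathrm{top}}(C)$ be the part of the union of the disks in $\mathcal{D}(C)$ lying above $\ell_{\mathrm{top}}(C)$. Then each disk $D_i\in\mathcal{D}(C)$ contributes at most one arc to the boundary of $U_{\mathrm{top}}(C)$. Moreover, for disks $D_i,D_j\in\mathcal{D}(C)$ with centers $p_i,p_j$ that both contribute arcs, the arc contributed by $D_i$ lies to the left of the arc contributed by $D_j$ if and only if $p_i$ lies to the left of $p_j$. *)

(* Defs.v *)
From HB Require Import structures.
From mathcomp Require Import all_boot all_order all_algebra.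
From mathcomp Require Import all_classical all_reals all_analysis.
Import numFieldNormedType.Exports.
Set Implicit Arguments. Unset Strict Implicit. Unset Printing Implicit Defensive.
Import Order.TTheory GRing.Theory Num.Theory.
Local Open Scope classical_set_scope.
Local Open Scope ring_scope.

Definition dist2 {R : realType} (a b : R * R) : R :=
  (a.1 - b.1) ^+ 2 + (a.2 - b.2) ^+ 2.

Definition disk2 {R : realType} (p : R * R) : set (R * R) :=
  [set q | dist2 q p <= 2].

Definition circle2 {R : realType} (p : R * R) : set (R * R) :=
  [set q | dist2 q p = 2].

Definition bdry {R : realType} (A : set (R * R)) : set (R * R) :=
  closure A `\` interior A.

Definition in_cell {R : realType} (x y : int) (p : R * R) : Prop :=
  x%:~R <= p.1 < x%:~R + 1 /\ y%:~R <= p.2 < y%:~R + 1.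

Definition Utop {R : realType} (y : int) (P : seq (R * R)) : set (R * R) :=
  [set q | (exists2 p, p \in P & disk2 p q) /\ y%:~R + 1 <= q.2].

(* the part of the boundary of U_top(C) contributed by the disk centred at p:
   points of the boundary of U_top lying on the circle of that disk
   (strictly above l_top, i.e. excluding the segment on the line) *)
Definition contrib {R : realType} (y : int) (P : seq (R * R)) (p : R * R)
  : set (R * R) :=
  [set q | bdry (Utop y P) q /\ circle2 p q /\ y%:~R + 1 < q.2].

(* the disk contributes an arc (of positive length) *)
Definition contributes {R : realType} (y : int) (P : seq (R * R)) (p : R * R)
  : Prop :=
  exists a b, [/\ contrib y P p a, contrib y P p b & a <> b].

Definition left_of {R : realType} (A B : set (R * R)) : Prop :=
  forall a b, A a -> B b -> a.1 <= b.1.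

(* Main.v *)
Require Import Defs.
From HB Require Import structures.
From mathcomp Require Import all_boot all_order all_algebra.
From mathcomp Require Import all_classical all_reals all_analysis.
From mathcomp Require Import ring lra.
Import Order.TTheory GRing.Theory Num.Theory numFieldNormedType.Exports.
Local Open Scope classical_set_scope.
Local Open Scope ring_scope.


Lemma Mlem (R : realFieldType) (a b a' b' d1 d2 : R) :
  a^+2 + b^+2 = 2 -> a'^+2 + b'^+2 = 2 -> 0 <= d1 -> a < a' ->
  0 < b -> d2 < b -> 0 < b' -> d2 < b' -> (d1 != 0) || (d2 != 0) ->
  (a - d1)^+2 + (b-d2)^+2 <= 2 -> (a' - d1)^+2 + (b'-d2)^+2 < 2.
Proof.
move=> h1 h2 h3 h4 h5 h6 h7 h8 h9 h10.
rewrite ltNge; apply/negP => h11.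
have hD : 0 < d1^+2 + d2^+2.
  case/orP: h9 => h.
    have : 0 < d1^+2 by rewrite lt0r sqrf_eq0 h sqr_ge0.
    have := sqr_ge0 d2; lra.
  have : 0 < d2^+2 by rewrite lt0r sqrf_eq0 h sqr_ge0.
  have := sqr_ge0 d1; lra.
have hM : d1^+2 + d2^+2 <= 2 * (a * d1 + b * d2) by nra.
have hM' : 2 * (a' * d1 + b' * d2) <= d1^+2 + d2^+2 by nra.
have hsub : (a' - a) * d1 + (b' - b) * d2 <= 0 by nra.
case: (lerP d2 0) => hd2.
  case: (lerP b' b) => hbb.
    have e1 : (a' - a) * d1 = 0 by nra.
    have e2 : (b' - b) * d2 = 0 by nra.
    have hd1 : d1 = 0.
      move/eqP: e1; rewrite mulf_eq0 subr_eq0 => /orP[/eqP|/eqP //]; lra.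
    have hd20 : d2 < 0.
      rewrite lt_neqAle hd2 andbT; move: h9; rewrite hd1 eqxx /=; by [].
    nra.
  have ha : 0 < a * d1 by nra.
  have ha0 : 0 < a.
    rewrite ltNge; apply/negP => ha0; nra.
  nra.
have hbb : b' < b.
  rewrite ltNge; apply/negP => hbb.
  have e1 : (a' - a) * d1 = 0 by nra.
  have e2 : (b' - b) * d2 = 0 by nra.
  have hb : b' = b.
    move/eqP: e2; rewrite mulf_eq0 subr_eq0 => /orP[/eqP //|/eqP]; lra.
  have hd1 : d1 = 0.
    move/eqP: e1; rewrite mulf_eq0 subr_eq0 => /orP[/eqP|/eqP //]; lra.
  subst; nra.
have ha' : 0 < a'.
  have : a^+2 < a'^+2 by nra.
  nra.
have hN' : a' * d2 - b' * d1 < 0.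
  rewrite ltNge; apply/negP => hN.
  have : b' * (d1^+2 + d2^+2) = (a'*d1 + b'*d2)*d2 - (a'*d2 - b'*d1)*d1 by ring.
  nra.
have hN : a * d2 - b * d1 < a' * d2 - b' * d1 by nra.
have hcr : a * b' < a' * b.
  case: (lerP a 0) => ha0; nra.
have hid : (a*d1+b*d2)*(a'*d2 - b'*d1) - (a*d2-b*d1)*(a'*d1+b'*d2)
     = (d1^+2+d2^+2) * (a'*b - a*b') by ring.
have hMN : (a*d1+b*d2)^+2 + (a*d2-b*d1)^+2 = 2 * (d1^+2+d2^+2).
  rewrite -h1; ring.
have hMN' : (a'*d1+b'*d2)^+2 + (a'*d2-b'*d1)^+2 = 2 * (d1^+2+d2^+2).
  rewrite -h2; ring.
case: (lerP 0 (a'*d1+b'*d2)) => hm'.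
  nra.
nra.
Qed.

Section S.
Variable R : realType.
Implicit Types p q r : R * R.

Lemma Mpt p r q q' : dist2 q p = 2 -> dist2 q' p = 2 -> p.1 <= r.1 -> q.1 < q'.1 ->
  p.2 < q.2 -> r.2 < q.2 -> p.2 < q'.2 -> r.2 < q'.2 -> p <> r ->
  dist2 q r <= 2 -> dist2 q' r < 2.
Proof.
rewrite /dist2 => h1 h2 h3 h4 h5 h6 h7 h8 h9 h10.
have := @Mlem R (q.1 - p.1) (q.2 - p.2) (q'.1 - p.1) (q'.2 - p.2) (r.1 - p.1) (r.2 - p.2).
have e1 : forall u v w : R, u - w - (v - w) = u - v by move=> u v w; ring.
rewrite !e1; apply => //; try lra.
rewrite -negb_and; apply/negP => /andP[/eqP a /eqP b]; apply: h9.
by case: p r {h1 h2 h3 h5 h7 h10 e1 h6 h8} a b => ? ? [? ?] /= a b; congr pair; lra.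
Qed.

Lemma Mpt' p r q q' : dist2 q p = 2 -> dist2 q' p = 2 -> r.1 <= p.1 -> q.1 < q'.1 ->
  p.2 < q.2 -> r.2 < q.2 -> p.2 < q'.2 -> r.2 < q'.2 -> p <> r ->
  dist2 q' r <= 2 -> dist2 q r < 2.
Proof.
rewrite /dist2 => h1 h2 h3 h4 h5 h6 h7 h8 h9 h10.
have H := @Mlem R (p.1 - q'.1) (q'.2 - p.2) (p.1 - q.1) (q.2 - p.2) (p.1 - r.1) (r.2 - p.2).
have : (p.1 - q.1 - (p.1 - r.1)) ^+ 2 + (q.2 - p.2 - (r.2 - p.2)) ^+ 2 < 2.
  have g1 : (p.1 - q'.1) ^+ 2 + (q'.2 - p.2) ^+ 2 = 2 by rewrite -h2; ring.
  have g2 : (p.1 - q.1) ^+ 2 + (q.2 - p.2) ^+ 2 = 2 by rewrite -h1; ring.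
  have g3 : (p.1 - r.1 != 0) || (r.2 - p.2 != 0).
    rewrite -negb_and; apply/negP => /andP[/eqP a /eqP b]; apply: h9.
    by case: p r {h1 h2 h3 h5 h7 h10 h6 h8 H g1 g2} a b => ? ? [? ?] /= a b; congr pair; lra.
  have g4 : (p.1 - q'.1 - (p.1 - r.1)) ^+ 2 + (q'.2 - p.2 - (r.2 - p.2)) ^+ 2 <= 2.
    suff -> : (p.1 - q'.1 - (p.1 - r.1)) ^+ 2 + (q'.2 - p.2 - (r.2 - p.2)) ^+ 2 = (q'.1 - r.1) ^+ 2 + (q'.2 - r.2) ^+ 2 by [].
    ring.
  apply: H => //; lra.
suff -> : (q.1 - r.1) ^+ 2 + (q.2 - r.2) ^+ 2 = (p.1 - q.1 - (p.1 - r.1)) ^+ 2 + (q.2 - p.2 - (r.2 - p.2)) ^+ 2 by [].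
ring.
Qed.
Lemma fst_cvg (q : R * R) : (fst @ q --> q.1).
Proof. exact: cvg_fst. Qed.
Lemma snd_cvg (q : R * R) : (snd @ q --> q.2).
Proof. exact: cvg_snd. Qed.

Lemma dist2_cvg (r q : R * R) : (fun z => dist2 z r) @ q --> dist2 q r.
Proof.
rewrite /dist2; apply: cvgD; rewrite !expr2; apply: cvgM; apply: cvgB;
  (apply: cvg_cst || apply: fst_cvg || apply: snd_cvg).
Qed.

Lemma near_lt2 (r q : R * R) : dist2 q r < 2 -> \forall z \near q, dist2 z r < 2.
Proof. move=> h; exact: (@cvgr_lt R _ _ _ _ _ (dist2_cvg r q) _ h). Qed.
Lemma near_gt2 (c : R) (q : R * R) : c < q.2 -> \forall z \near q, c < z.2.
Proof. move=> h; exact: (@cvgr_gt R _ _ _ _ _ (snd_cvg q) _ h). Qed.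

Lemma vert_cvg (q : R * R) : (fun e : R => (q.1, q.2 + e)) @ 0 --> q.
Proof.
have h : (fun e : R => (q.1, q.2 + e)) @ 0 --> (q.1, q.2 + 0).
  apply: (@cvg_pair R R R (nbhs (0:R)) (nbhs q.1) (nbhs (q.2 + 0)) _ _ _ (fun=> q.1) (fun e => q.2 + e)).
    exact: cvg_cst.
  apply: cvgD; [exact: cvg_cst| exact: cvg_id].
by rewrite addr0 -surjective_pairing in h.
Qed.

Lemma exists_pos (S : set R) : nbhs (0:R) S -> exists2 e, 0 < e & S e.
Proof.
move=> /nbhs_ballP [e /= e0 he]; exists (e / 2); first by rewrite divr_gt0.
apply: he; rewrite /ball /= sub0r normrN gtr0_norm ?divr_gt0 //.
by rewrite ltr_pdivrMr // ltr_pMr // ltr1n.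
Qed.
End S.
Section T.
Variable R : realType.
Implicit Types p q r : R * R.

Lemma contrib_char (y : int) (P : seq (R * R)) p q :
  p \in P -> (forall r, r \in P -> r.2 < y%:~R + 1) ->
  contrib y P p q <-> [/\ dist2 q p = 2, y%:~R + 1 < q.2 &
                        forall r, r \in P -> 2 <= dist2 q r].
Proof.
move=> hp hPc; split.
  move=> [[hcl hint] [hcirc hc]]; split => // r hr.
  rewrite leNgt; apply/negP => hlt; apply: hint.
  rewrite /interior /=.
  near=> z; split.
    exists r => //; rewrite /disk2; apply: ltW; near: z; exact: near_lt2.
  apply: ltW; near: z; exact: near_gt2.
move=> [hcirc hc hall]; split; last by split.
split.
  apply: subset_closure; split; last exact: ltW.
  by exists p => //; rewrite /disk2 /= hcirc.
move=> hint.
have := @vert_cvg R q _ hint.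
move=> /exists_pos [e e0 [[r hr hd] _]].
have h2 := hall r hr; have h3 := hPc r hr.
move: hd h2; rewrite /disk2 /dist2 /=; nra.
Unshelve. all: by end_near.
Qed.

Lemma same_x p a a' : dist2 a p = 2 -> dist2 a' p = 2 -> p.2 < a.2 -> p.2 < a'.2 ->
  a.1 = a'.1 -> a = a'.
Proof.
case: a a' => [a1 a2] [b1 b2]; rewrite /dist2 /= => h1 h2 h3 h4 e; subst b1.
congr pair; nra.
Qed.

Lemma hcont p : continuous (fun t : R => (t, p.2 + Num.sqrt (2 - (t - p.1) ^+ 2))).
Proof.
move=> t.
apply: (@cvg_pair R R R (nbhs t) (nbhs t) (nbhs (p.2 + Num.sqrt (2 - (t - p.1) ^+ 2))) _ _ _ id).
  exact: cvg_id.
apply: cvgD; first exact: cvg_cst.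
have hg : (fun t' : R => 2 - (t' - p.1) ^+ 2) @ t --> 2 - (t - p.1) ^+ 2.
  apply: cvgB; first exact: cvg_cst.
  rewrite !expr2; apply: cvgM; apply: cvgB; (exact: cvg_id || exact: cvg_cst).
exact: (continuous_comp hg (@sqrt_continuous R _)).
Qed.

Lemma sq_lt2 (lo x hi : R) : lo ^+ 2 < 2 -> hi ^+ 2 < 2 -> lo < x -> x < hi -> x ^+ 2 < 2.
Proof. move=> h1 h2 h3 h4; case: (lerP 0 x) => hx; nra. Qed.

Lemma Left (y : int) (P : seq (R * R)) pi pj :
  (forall r, r \in P -> r.2 < y%:~R + 1) ->
  pi \in P -> pj \in P -> pi.1 < pj.1 -> forall a b,
  contrib y P pi a -> contrib y P pj b -> a.1 <= b.1.
Proof.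
move=> hPc hi hj hlt a b /(contrib_char _ _ _ _ hi hPc) [ha1 ha2 ha3]
  /(contrib_char _ _ _ _ hj hPc) [hb1 hb2 hb3].
rewrite leNgt; apply/negP => hba.
have hpi := hPc _ hi; have hpj := hPc _ hj.
have A1 := ha3 _ hj; have B1 := hb3 _ hi.
have hneq : pi <> pj by move=> e; rewrite e in hlt; rewrite ltxx in hlt.
move: ha1 hb1 A1 B1; rewrite /dist2 => ha1 hb1 A1 B1.
have hai : (a.1 - pi.1) ^+ 2 < 2 by nra.
have hbj : (b.1 - pj.1) ^+ 2 < 2 by nra.
case: (lerP pi.2 pj.2) => hy.
  pose s := 2 - (a.1 - pj.1) ^+ 2.
  have s0 : 0 < s.
    rewrite /s subr_gt0; apply: (@sq_lt2 (b.1 - pj.1) _ (a.1 - pi.1)) => //; lra.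
  pose Y := Num.sqrt s.
  have Y0 : 0 < Y by rewrite /Y sqrtr_gt0.
  have Y2 : Y ^+ 2 = s by rewrite /Y sqr_sqrtr // ltW.
  pose a' := (a.1, pj.2 + Y).
  have ca' : dist2 a' pj = 2.
    rewrite /dist2 /a' /=; have -> : pj.2 + Y - pj.2 = Y by ring.
    by rewrite Y2 /s; ring.
  have aY : Y <= a.2 - pj.2.
    have g : Y^+2 <= (a.2 - pj.2)^+2 by rewrite Y2 /s; lra.
    have g' : 0 < a.2 - pj.2 by lra.
    nra.
  have da' : dist2 a' pi <= 2.
    rewrite /dist2 /a' /=.
    have g0 : 0 <= pj.2 + Y - pi.2 by lra.
    have g1 : pj.2 + Y - pi.2 <= a.2 - pi.2 by lra.
    nra.
  have := @Mpt' R pj pi b a' _ ca' (ltW hlt) _ _ _ _ _ (nesym hneq) da'.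
  rewrite /dist2 /a' /=; move=> H; have := H hb1 hba; lra.
pose s := 2 - (b.1 - pi.1) ^+ 2.
have s0 : 0 < s.
  rewrite /s subr_gt0; apply: (@sq_lt2 (b.1 - pj.1) _ (a.1 - pi.1)) => //; lra.
pose Y := Num.sqrt s.
have Y0 : 0 < Y by rewrite /Y sqrtr_gt0.
have Y2 : Y ^+ 2 = s by rewrite /Y sqr_sqrtr // ltW.
pose b' := (b.1, pi.2 + Y).
have cb' : dist2 b' pi = 2.
  rewrite /dist2 /b' /=; have -> : pi.2 + Y - pi.2 = Y by ring.
  by rewrite Y2 /s; ring.
have bY : Y <= b.2 - pi.2.
  have g : Y^+2 <= (b.2 - pi.2)^+2 by rewrite Y2 /s; lra.
  have g' : 0 < b.2 - pi.2 by lra.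
  nra.
have db' : dist2 b' pj <= 2.
  rewrite /dist2 /b' /=.
  have g0 : 0 <= pi.2 + Y - pj.2 by lra.
  have g1 : pi.2 + Y - pj.2 <= b.2 - pj.2 by lra.
  nra.
have := @Mpt R pi pj b' a cb' _ (ltW hlt) _ _ _ _ _ hneq db'.
rewrite /dist2 /b' /=; move=> H; have := H ha1 hba; lra.
Qed.
End T.

Theorem lemma11 (R : realType) (x y : int) (P : seq (R * R))
  (hP : forall p, p \in P -> in_cell x y p) :
  (forall p, p \in P -> connected (contrib y P p)) /\
  (forall pi pj, pi \in P -> pj \in P ->
     contributes y P pi -> contributes y P pj ->
     (left_of (contrib y P pi) (contrib y P pj) <-> pi.1 < pj.1)).
Proof.
have hPc : forall r, r \in P -> r.2 < y%:~R + 1.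
  by move=> r /hP [_ /andP[_ ?]].
split.
  move=> p hp.
  pose h := fun t : R => (t, p.2 + Num.sqrt (2 - (t - p.1) ^+ 2)).
  pose I := [set t | contrib y P p (h t)].
  have hpc := hPc _ hp.
  have -> : contrib y P p = h @` I.
    apply/seteqP; split => q.
      move=> hq; exists q.1; last first.
        have [h1 h2 _] := (contrib_char _ _ _ _ _ hp hPc).1 hq.
        move: h1; rewrite /dist2 /h => h1.
        have -> : 2 - (q.1 - p.1) ^+ 2 = (q.2 - p.2) ^+ 2 by lra.
        rewrite sqrtr_sqr gtr0_norm; last by lra.
        by case: q {hq h1 h2} => ? ? /=; congr pair; ring.
      rewrite /I /=.
      have [h1 h2 _] := (contrib_char _ _ _ _ _ hp hPc).1 hq.
      suff -> : h q.1 = q by [].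
      move: h1; rewrite /dist2 /h => h1.
      have -> : 2 - (q.1 - p.1) ^+ 2 = (q.2 - p.2) ^+ 2 by lra.
      rewrite sqrtr_sqr gtr0_norm; last by lra.
      by case: q {hq h1 h2} => ? ? /=; congr pair; ring.
    by move=> [t It <-].
  apply: connected_continuous_connected; last first.
    by apply: continuous_subspaceT; exact: hcont.
  apply/connected_intervalP => t1 t2 It1 It2 t /andP[ht1 ht2].
  have [c1 c2 c3] := (contrib_char _ _ _ _ _ hp hPc).1 It1.
  have [d1 d2 d3] := (contrib_char _ _ _ _ _ hp hPc).1 It2.
  have key : forall u : R, contrib y P p (h u) -> 
     (u - p.1)^+2 < 2 - (y%:~R + 1 - p.2)^+2.
    move=> u /(contrib_char _ _ _ _ _ hp hPc) [e1 e2 _].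
    move: e1 e2; rewrite /dist2 /h /= => e1 e2.
    have g0 : 0 <= Num.sqrt (2 - (u - p.1) ^+ 2) := sqrtr_ge0 _.
    have g1 : (y%:~R + 1 - p.2) ^+ 2 < Num.sqrt (2 - (u - p.1) ^+ 2) ^+ 2.
      have g2 : 0 < y%:~R + 1 - p.2 by lra.
      have g3 : y%:~R + 1 - p.2 < Num.sqrt (2 - (u - p.1) ^+ 2) by lra.
      nra.
    have -> : (u - p.1) ^+ 2 = 2 - Num.sqrt (2 - (u - p.1) ^+ 2) ^+ 2.
      move: e1; have -> : p.2 + Num.sqrt (2 - (u - p.1) ^+ 2) - p.2 = Num.sqrt (2 - (u - p.1) ^+ 2) by ring.
      lra.
    lra.
  have k1 := key _ It1; have k2 := key _ It2.
  have kt : (t - p.1)^+2 < 2 - (y%:~R + 1 - p.2)^+2.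
    case: (lerP p.1 t) => ht; nra.
  have sq0 : 0 < 2 - (t - p.1) ^+ 2.
    have := sqr_ge0 (y%:~R + 1 - p.2); lra.
  have S2 := sqr_sqrtr (ltW sq0).
  have S0 := sqrtr_ge0 (2 - (t - p.1) ^+ 2).
  have circ : dist2 (h t) p = 2.
    rewrite /dist2 /h /=.
    have -> : p.2 + Num.sqrt (2 - (t - p.1) ^+ 2) - p.2 = Num.sqrt (2 - (t - p.1) ^+ 2) by ring.
    rewrite S2; ring.
  have above : y%:~R + 1 < (h t).2.
    rewrite /h /=.
    have g2 : 0 < y%:~R + 1 - p.2 by lra.
    have : (y%:~R + 1 - p.2) ^+ 2 < Num.sqrt (2 - (t - p.1) ^+ 2) ^+ 2 by rewrite S2; lra.
    nra.
  apply/(contrib_char _ _ _ _ _ hp hPc); split => // r hr.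
  have hr2 := hPc _ hr.
  have [->|hne] := eqVneq r p; first by rewrite circ.
  have hne' : p <> r by move=> e; rewrite e eqxx in hne.
  rewrite leNgt; apply/negP => hlt.
  case: (lerP p.1 r.1) => hpr.
    move: ht2; rewrite le_eqVlt => /orP[/eqP e|ht2].
      by move: hlt; rewrite e ltNge d3.
    have Hq : p.2 < (h t).2 by lra.
    have Hr : r.2 < (h t).2 by lra.
    have Hq2 : p.2 < (h t2).2 by lra.
    have Hr2 : r.2 < (h t2).2 by lra.
    have := @Mpt R p r (h t) (h t2) circ d1 hpr ht2 Hq Hr Hq2 Hr2 hne' (ltW hlt).
    by rewrite ltNge d3.
  move: ht1; rewrite le_eqVlt => /orP[/eqP e|ht1].
    by move: hlt; rewrite -e ltNge c3.
  have Hq : p.2 < (h t).2 by lra.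
  have Hr : r.2 < (h t).2 by lra.
  have Hq1 : p.2 < (h t1).2 by lra.
  have Hr1 : r.2 < (h t1).2 by lra.
  have := @Mpt' R p r (h t1) (h t) c1 circ (ltW hpr) ht1 Hq1 Hr1 Hq Hr hne' (ltW hlt).
  by rewrite ltNge c3.
move=> pi pj hi hj [a [a' [ha ha' hne]]] [b [b' [hb hb' _]]].
have hpi := hPc _ hi; have hpj := hPc _ hj.
have [a1 a2 a3] := (contrib_char _ _ _ _ _ hi hPc).1 ha.
have [a1' a2' a3'] := (contrib_char _ _ _ _ _ hi hPc).1 ha'.
have [b1 b2 b3] := (contrib_char _ _ _ _ _ hj hPc).1 hb.
have same : a.1 = a'.1 -> False.
  by move=> e; apply: hne; apply: (@same_x R pi a a' a1 a1') => //; lra.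
split; last by move=> hlt; exact: (@Left R y P pi pj hPc hi hj hlt).
move=> hl; rewrite ltNge; apply/negP => hle.
have e1 := hl a b ha hb; have e2 := hl a' b ha' hb.
move: hle; rewrite le_eqVlt => /orP[/eqP heq|hlt]; last first.
  have f1 := @Left R y P pj pi hPc hj hi hlt b a hb ha; have f2 := @Left R y P pj pi hPc hj hi hlt b a' hb ha'.
  by apply: same; lra.
have [epq|hneq] := eqVneq pi pj.
  subst pj; have g1 := hl a a' ha ha'; have g2 := hl a' a ha' ha.
  by apply: same; lra.
have hy : pi.2 != pj.2.
  apply/negP => /eqP ey; move/eqP: hneq; apply.
  by case: pi pj heq ey {hi hj hl hpi hpj a1 a2 a3 a1' a2' a3' b1 b2 b3 ha ha' hb hb' e1 e2 hPc} => ? ? [? ?] /= -> ->.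
case: (ltgtP pi.2 pj.2) hy => // hy _.
  have := a3 _ hj; move: a1; rewrite /dist2 heq => a1.
  have g : 0 < a.2 - pj.2 by lra.
  nra.
have := b3 _ hi; move: b1; rewrite /dist2 heq => b1.
have g : 0 < b.2 - pi.2 by lra.
nra.
Qed.
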